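(* Let $a=1$. Define $\boldsymbol{\alpha}_0=\boldsymbol{\beta}_0=1$ and, for $n\ge1$, \[ \boldsymbol{\alpha}_n(1,k)=(-1)^n q^{-n^2/2}\left(q^{-3n/2}+q^{3n/2}\right),\qquad \boldsymbol{\beta}_n(1,k)=\frac{(-1)^n(1-kq^n+kq^{2n})(k;q)_{n}}{q^{(n^2+3n)/2}(q;q)_n}. \] Then $(\boldsymbol{\alpha}_n(1,k),\boldsymbol{\beta}_n(1,k))$ is a WP-Bailey pair relative to $a=1$.
   Context: Notation: $(x;q)_n=\prod_{i=0}^{n-1}(1-xq^i)$. A pair of sequences $(\boldsymbol{\alpha}_n(a,k,q),\boldsymbol{\beta}_n(a,k,q))_{n\ge0}$ is a WP-Bailey pair (relative to $a$, with parameter $k$) if $\boldsymbol{\alpha}_0=1$ and for all $n\ge0$ \[\boldsymbol{\beta}_n=\sum_{j=0}^n\frac{(k/a;q)_{n-j}(k;q)_{n+j}}{(q;q)_{n-j}(aq;q)_{n+j}}\boldsymbol{\alpha}_j.\] *)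

(* Defs.v *)
From HB Require Import structures.
From mathcomp Require Import all_boot all_order all_algebra.
Set Implicit Arguments. Unset Strict Implicit. Unset Printing Implicit Defensive.
Import Order.TTheory GRing.Theory Num.Theory.
Local Open Scope ring_scope.

Definition qpoch (R : pzRingType) (x q : R) (n : nat) : R :=
  \prod_(i < n) (1 - x * q ^+ i).

Definition WP_Bailey_pair (R : fieldType) (a k q : R) (alpha beta : nat -> R) : Prop :=
  alpha 0%N = 1 /\
  forall n : nat,
    beta n = \sum_(j < n.+1)
      (qpoch (k / a) q (n - j) * qpoch k q (n + j))
      / (qpoch q q (n - j) * qpoch (a * q) q (n + j)) * alpha j.

(* The exponent (n^2 + 3n)/2, always an integer. *)
Definition e7 (n : nat) : nat := (n * n + 3 * n)./2.

(* alpha_n(1,k) = (-1)^n q^{-n^2/2} (q^{-3n/2} + q^{3n/2})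
               = (-1)^n (q^{-(n^2+3n)/2} + q^{3n - (n^2+3n)/2}). *)
Definition alpha7 (R : fieldType) (q : R) (n : nat) : R :=
  if n == 0%N then 1 else
  (-1) ^+ n * (q ^ (- (e7 n)%:Z) + q ^ ((3 * n)%:Z - (e7 n)%:Z)).

Definition beta7 (R : fieldType) (k q : R) (n : nat) : R :=
  if n == 0%N then 1 else
  (-1) ^+ n * (1 - k * q ^+ n + k * q ^+ (2 * n)) * qpoch k q n
    / (q ^+ e7 n * qpoch q q n).

(* Main.v *)
Require Import Defs.
From HB Require Import structures.
From mathcomp Require Import all_boot all_order all_algebra.
From mathcomp Require Import ring zify.
Import GRing.Theory.
Local Open Scope ring_scope.

Lemma Cx2 x : (2 * 'C(x.+1, 2) = x * x.+1)%N.
Proof. elim: x => [|x IH]; first by []. rewrite binS bin1 mulnDr IH; lia. Qed.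

Definition tri (x : nat) : nat := 'C(x.+1, 2).
Arguments tri : simpl never.
Lemma tri2 x : (2 * tri x = x * x.+1)%N.
Proof. exact: Cx2. Qed.

Lemma dbl a b : (2 * a = 2 * b)%N -> a = b.
Proof. lia. Qed.

Section Proof7.
Variables (R : fieldType) (k q : R).
Hypothesis hq0 : q != 0.
Hypothesis hq : forall m : nat, (0 < m)%N -> q ^+ m != 1.

Definition p := q^-1.
Lemma pq : p * q = 1. Proof. by rewrite /p mulVf. Qed.

Lemma qp_shift a b d : q^+a * p^+b = q^+(a+d) * p^+(b+d).
Proof.
have h1 : q^+d * p^+d = 1 by rewrite -exprMn mulrC pq expr1n.
rewrite !exprD mulrACA h1 mulr1. by [].
Qed.

Lemma qp_eq a b c d : (a + d = c + b)%N -> q^+a * p^+b = q^+c * p^+d.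
Proof. by move=> h; rewrite (qp_shift a b d) (qp_shift c d b) h [(d + b)%N]addnC. Qed.

Definition c m := qpoch k q m / qpoch q q m.
Definition W (n i : nat) : R :=
  (-1) ^+ (i + n) * (q ^+ (i * n + n) * p ^+ (tri i + tri n)).
Definition Tg (M n : nat) : R := \sum_(0 <= i < M.+1) c (M - i) * c i * W n i.

Lemma qpochS x m : qpoch x q m.+1 = qpoch x q m * (1 - x * q ^+ m).
Proof. by rewrite /qpoch big_ord_recr. Qed.
Lemma qqS m : 1 - q * q^+m != 0.
Proof. by rewrite -exprS subr_eq0 eq_sym; exact: hq. Qed.
Lemma qq_neq0 m : qpoch q q m != 0.
Proof. rewrite /qpoch; apply/prodf_neq0 => i _; exact: qqS. Qed.
Lemma c0 : c 0 = 1.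
Proof. by rewrite /c /qpoch !big_ord0 divr1. Qed.
Lemma pascal e : c e.+1 * (1 - q^+e.+1) = c e * (1 - k * q^+e).
Proof.
have h1 := qq_neq0 e; have h2 := qqS e.
rewrite /c !qpochS exprS. field. by rewrite h1 h2.
Qed.

Lemma W1 m n i d : (i + d = m + n)%N -> q^+m * W n i = - (q^+d * W n.+1 i).
Proof.
move=> h; rewrite /W addnS exprS mulN1r.
have -> : q ^+ m * ((-1) ^+ (i + n) * (q ^+ (i * n + n) * p ^+ (tri i + tri n)))
  = (-1) ^+ (i + n) * (q ^+ (m + (i * n + n)) * p ^+ (tri i + tri n)).
  by rewrite [q ^+ (m + _)]exprD; ring.
have -> : q ^+ d * (- (-1) ^+ (i + n) * (q ^+ (i * n.+1 + n.+1) * p ^+ (tri i + tri n.+1)))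
  = - ((-1) ^+ (i + n) * (q ^+ (d + (i * n.+1 + n.+1)) * p ^+ (tri i + tri n.+1))).
  by rewrite [q ^+ (d + _)]exprD; ring.
rewrite opprK; congr (_ * _); apply: qp_eq.
move: (tri2 i) (tri2 n) (tri2 n.+1); nia.
Qed.

Lemma sgn_eq x y : ~~ odd (x + y) -> (-1) ^+ x = (-1) ^+ y :> R.
Proof.
move=> h; rewrite -(signr_odd _ x) -(signr_odd _ y); move: h; rewrite oddD.
by case: (odd x); case: (odd y).
Qed.

Lemma spq_eq x y a b c d : ~~ odd (x + y) -> (a + d = c + b)%N ->
  (-1) ^+ x * (q ^+ a * p ^+ b) = (-1) ^+ y * (q ^+ c * p ^+ d).
Proof. by move=> h1 h2; rewrite (sgn_eq _ _ h1) (qp_eq _ _ _ _ h2). Qed.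

Lemma W2 m n a b : (a + b = m + n.+1)%N -> W n.+1 a = - W m.+1 b.
Proof.
move=> h; rewrite /W -mulNr -(mulN1r ((-1) ^+ _)) -exprS.
apply: spq_eq.
  move: h; lia.
move: (tri2 a) (tri2 b) (tri2 m.+1) (tri2 n.+1); nia.
Qed.

Lemma anti m n : Tg (m + n).+1 n.+1 = - Tg (m + n).+1 m.+1.
Proof.
rewrite /Tg big_nat_rev /= -sumrN; apply: eq_big_nat => i /andP[_ hi].
rewrite add0n subSS subKn; last by lia.
rewrite (W2 m n ((m + n).+1 - i) i); last by lia.
ring.
Qed.

Lemma zero m : Tg (m + m).+1 m.+1 = 0.
Proof.
rewrite /Tg (big_cat_nat _ (n := m.+1)) //=; last by lia.
rewrite (big_addn 0 _ m.+1).
have -> : ((m + m).+2 - m.+1 = m.+1)%N by lia.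
rewrite big_nat_rev /=.
rewrite [X in X + _](eq_big_nat _ _ (F2 := fun i => - (c ((m + m).+1 - (i + m.+1)) * c (i + m.+1) * W m.+1 (i + m.+1)))).
  by rewrite sumrN addNr.
move=> i /andP[_ hi].
rewrite add0n subSS.
have -> : ((m + m).+1 - (m - i) = i + m.+1)%N by lia.
rewrite (W2 m m (m - i) (i + m.+1)); last by lia.
have -> : ((m + m).+1 - (i + m.+1) = m - i)%N by lia.
ring.
Qed.

Lemma LA m n : Tg (m + n).+2 n.+1 - Tg (m + n).+1 n.+1 =
  - (q ^+ m.+2 * Tg (m + n).+2 n) + k * q ^+ m.+1 * Tg (m + n).+1 n.
Proof.
rewrite /Tg big_nat_recr // [in X in _ = - (_ * X) + _]big_nat_recr //=.
set M := (m + n).+1.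
have E : \sum_(0 <= i < M.+1) (c (M.+1 - i) * c i * W n.+1 i - c (M - i) * c i * W n.+1 i)
  = \sum_(0 <= i < M.+1) (- (q ^+ m.+2 * (c (M.+1 - i) * c i * W n i))
        + k * q ^+ m.+1 * (c (M - i) * c i * W n i)).
  apply: eq_big_nat => i /andP[_ hi].
  rewrite subSn; last by lia.
  set e := (M - i)%N.
  have h1 : q ^+ m.+2 * W n i = - (q ^+ e.+1 * W n.+1 i) by apply: W1; rewrite /e /M; lia.
  have h2 : q ^+ m.+1 * W n i = - (q ^+ e * W n.+1 i) by apply: W1; rewrite /e /M; lia.
  have -> : q ^+ m.+2 * (c e.+1 * c i * W n i) = c e.+1 * c i * (q ^+ m.+2 * W n i) by ring.
  have -> : k * q ^+ m.+1 * (c e * c i * W n i) = k * c e * c i * (q ^+ m.+1 * W n i) by ring.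
  rewrite h1 h2.
  apply/eqP; rewrite -subr_eq0; apply/eqP.
  transitivity (c i * W n.+1 i * (c e.+1 * (1 - q ^+ e.+1) - c e * (1 - k * q ^+ e))).
    by ring.
  by rewrite pascal subrr mulr0.
have E2 : \sum_(0 <= i < M.+1) c (M.+1 - i) * c i * W n.+1 i -
    \sum_(0 <= i < M.+1) c (M - i) * c i * W n.+1 i =
  - (q ^+ m.+2 * \sum_(0 <= i < M.+1) c (M.+1 - i) * c i * W n i)
    + k * q ^+ m.+1 * \sum_(0 <= i < M.+1) c (M - i) * c i * W n i.
  by rewrite -sumrB E big_split /= sumrN -!mulr_sumr.
rewrite subnn.
have h3 : q ^+ m.+2 * W n M.+1 = - (q ^+ 0 * W n.+1 M.+1) by apply: W1; rewrite /M; lia.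
have -> : q ^+ m.+2 * (\sum_(0 <= i < M.+1) c (M.+1 - i) * c i * W n i + c 0 * c M.+1 * W n M.+1)
   = q ^+ m.+2 * (\sum_(0 <= i < M.+1) c (M.+1 - i) * c i * W n i) + c 0 * c M.+1 * (q ^+ m.+2 * W n M.+1)
   by ring.
rewrite h3 expr0 mul1r.
have -> : \sum_(0 <= i < M.+1) c (M.+1 - i) * c i * W n.+1 i + c 0 * c M.+1 * W n.+1 M.+1 -
    \sum_(0 <= i < M.+1) c (M - i) * c i * W n.+1 i
  = (\sum_(0 <= i < M.+1) c (M.+1 - i) * c i * W n.+1 i -
    \sum_(0 <= i < M.+1) c (M - i) * c i * W n.+1 i) + c 0 * c M.+1 * W n.+1 M.+1 by ring.
rewrite E2; ring.
Qed.

Lemma e7E j : e7 j = (tri j + j)%N.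
Proof.
rewrite /e7 -[(tri j + j)%N]doubleK; congr (_./2).
rewrite -mul2n; move: (tri2 j); lia.
Qed.

Lemma WA m j : - q * W m (j + m.+1) = (-1) ^+ j * p ^+ (e7 j).
Proof.
transitivity ((-1) ^+ j * (q ^+ 0 * p ^+ (e7 j))); last by rewrite expr0 mul1r.
rewrite /W e7E.
have -> : - q * ((-1) ^+ (j + m.+1 + m) * (q ^+ ((j + m.+1) * m + m) * p ^+ (tri (j + m.+1) + tri m)))
  = (-1) ^+ (j + m.+1 + m).+1 * (q ^+ ((j + m.+1) * m + m).+1 * p ^+ (tri (j + m.+1) + tri m))
  by rewrite !exprS; ring.
apply: spq_eq; first by lia.
move: (tri2 j) (tri2 (j + m.+1)) (tri2 m); nia.
Qed.

Lemma WB a j m : (a + j = m.+1)%N -> - q * W m a = (-1) ^+ j * (q ^+ (3 * j) * p ^+ (e7 j)).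
Proof.
move=> h; rewrite /W e7E.
have -> : - q * ((-1) ^+ (a + m) * (q ^+ (a * m + m) * p ^+ (tri a + tri m)))
  = (-1) ^+ (a + m).+1 * (q ^+ (a * m + m).+1 * p ^+ (tri a + tri m))
  by rewrite !exprS; ring.
apply: spq_eq; first by lia.
move: (tri2 j) (tri2 a) (tri2 m); nia.
Qed.

Lemma alphaS j : alpha7 q j.+1 =
  (-1) ^+ j.+1 * (p ^+ (e7 j.+1) + q ^+ (3 * j.+1) * p ^+ (e7 j.+1)).
Proof.
rewrite /alpha7 /= expfzDr // -!exprz_inv.
by [].
Qed.

Lemma conv m : \sum_(0 <= j < m.+2) c (m.+1 - j) * c (m.+1 + j) * alpha7 q j
  = - q * Tg (m + m).+2 m.
Proof.
pose f i := c ((m + m).+2 - i) * c i * W m i.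
have -> : Tg (m + m).+2 m = \sum_(0 <= i < (m + m).+3) f i by [].
rewrite [in RHS](big_cat_nat _ (n := m.+1)) //; last by lia.
rewrite [in RHS](big_addn 0 _ m.+1).
have -> : ((m + m).+3 - m.+1 = m.+2)%N by lia.
rewrite [X in _ = - q * (X + _)]big_nat_rev.
rewrite mulrDr !mulr_sumr.
transitivity (\sum_(0 <= j < m.+2) (- q * f (j + m.+1)%N) +
   \sum_(0 <= j < m.+2) (if j is j'.+1 then - q * f (m - j')%N else 0)).
  rewrite -big_split; apply: eq_big_nat => j /andP[_ hj].
  case: j hj => [|j] hj.
    rewrite /alpha7 /= addr0 mulr1 /f.
    have h : - q * W m (0 + m.+1) = 1.
      rewrite WA (_ : e7 0 = 0%N) //; by rewrite !expr0 mulr1.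
    have -> : - q * (c ((m + m).+2 - (0 + m.+1)) * c (0 + m.+1) * W m (0 + m.+1))
      = c ((m + m).+2 - (0 + m.+1)) * c (0 + m.+1) * (- q * W m (0 + m.+1)) by ring.
    rewrite h mulr1 subn0 addn0 add0n.
    by rewrite (_ : ((m + m).+2 - m.+1 = m.+1)%N) //; lia.
  rewrite alphaS /f /=.
  have h1 := WA m j.+1.
  have h2 : - q * W m (m - j) = (-1) ^+ j.+1 * (q ^+ (3 * j.+1) * p ^+ (e7 j.+1)).
    by apply: WB; lia.
  have -> : - q * (c ((m + m).+2 - (j.+1 + m.+1)) * c (j.+1 + m.+1) * W m (j.+1 + m.+1))
      = c ((m + m).+2 - (j.+1 + m.+1)) * c (j.+1 + m.+1) * (- q * W m (j.+1 + m.+1)) by ring.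
  have -> : - q * (c ((m + m).+2 - (m - j)) * c (m - j) * W m (m - j))
      = c ((m + m).+2 - (m - j)) * c (m - j) * (- q * W m (m - j)) by ring.
  rewrite h1 h2.
  rewrite (_ : ((m + m).+2 - (j.+1 + m.+1) = m - j)%N); last by lia.
  rewrite (_ : ((m + m).+2 - (m - j) = j.+1 + m.+1)%N); last by lia.
  rewrite subSS (addnC m.+1).
  ring.
rewrite addrC big_nat_recl // add0r.
congr (_ + _); apply: eq_big_nat => i _; by rewrite add0n subSS.
Qed.

Definition D n := Tg (n + n) n.
Definition E n := Tg (n + n).+1 n.

Lemma lin (x y u v l : R) : u = v -> x - y = l * (u - v) -> x = y.
Proof. by move=> ->; rewrite subrr mulr0 => /eqP; rewrite subr_eq0 => /eqP. Qed.

Lemma Rel1 n : q ^+ n.+2 * E n.+1 = - (1 - k * q ^+ n.+1) * D n.+1.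
Proof.
have h := LA n n.+1; have z := zero n.+1; have a := anti n n.+1.
rewrite /D /E; rewrite !addSn !addnS in h z a *.
rewrite z a sub0r opprK in h.
apply: (lin _ _ _ _ 1 h); ring.
Qed.

Lemma Rel2 n : E n.+1 = (1 - q ^+ n.+2) * D n.+2.
Proof.
have h := LA n n.+2; have z := zero n.+1; have a1 := anti n.+1 n.+2; have a2 := anti n n.+2.
rewrite /D /E; rewrite !addSn !addnS in h z a1 a2 *.
rewrite a1 a2 z mulr0 addr0 in h.
apply: (lin _ _ _ _ 1 h); ring.
Qed.

Definition P n := (-1) ^+ n * qpoch k q n / (qpoch q q n * q ^+ tri n).

Lemma triS n : tri n.+1 = (tri n + n.+1)%N.
Proof. by rewrite /tri binS bin1. Qed.

Lemma D1 : D 1 = P 1.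
Proof.
have h1 : 1 - q != 0 by rewrite subr_eq0 eq_sym; move: (hq 1 isT); rewrite expr1.
have h2 : 1 - q * q != 0 by rewrite subr_eq0 eq_sym -expr2; exact: hq.
rewrite /D /P /Tg /= !big_nat_recr //= big_geq // /c /W /p /tri /qpoch /=.
rewrite !big_ord_recr !big_ord0 /=.
field.
by rewrite hq0 h1 h2 oner_neq0.
Qed.

Lemma E0 : E 0 = (1 - q) * D 1.
Proof.
have h1 : 1 - q != 0 by rewrite subr_eq0 eq_sym; move: (hq 1 isT); rewrite expr1.
have h2 : 1 - q * q != 0 by rewrite subr_eq0 eq_sym -expr2; exact: hq.
rewrite D1 /P /E /Tg /= !big_nat_recr //= big_geq // /c /W /p /tri /qpoch /=.
rewrite !big_ord_recr !big_ord0 /=.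
field.
by rewrite hq0 h1 oner_neq0.
Qed.

Lemma Dclosed n : D n.+1 = P n.+1.
Proof.
elim: n => [|n IH]; first exact: D1.
have r1 := Rel1 n; have r2 := Rel2 n.
have hqn : q ^+ n.+2 != 0 by rewrite expf_neq0.
have h1 : 1 - q ^+ n.+2 != 0 by rewrite subr_eq0 eq_sym; exact: hq.
have h : (1 - q ^+ n.+2) * q ^+ n.+2 * D n.+2 = - (1 - k * q ^+ n.+1) * P n.+1.
  by rewrite -IH -r1 r2; ring.
have hx : (1 - q ^+ n.+2) * q ^+ n.+2 != 0 by rewrite mulf_neq0.
apply: (mulfI hx); rewrite h /P.
rewrite [qpoch k q n.+2]qpochS [qpoch q q n.+2]qpochS (triS n.+1) exprD -exprS.
have h3 := qq_neq0 n.+1; have h4 : q ^+ tri n.+1 != 0 by rewrite expf_neq0.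
have h5 : 1 - q * q ^+ n.+1 != 0 by rewrite -exprS.
rewrite [(-1) ^+ n.+2]exprS.
move: ((-1) ^+ n.+1) (qpoch k q n.+1) (qpoch q q n.+1) h3 (q ^+ tri n.+1) h4 (q ^+ n.+2) hqn h1 => s A B hB X hX Y hY hY1.
field.
by rewrite hY hX hY1 hB.
Qed.

Lemma final m : \sum_(0 <= j < m.+2) c (m.+1 - j) * c (m.+1 + j) * alpha7 q j = beta7 k q m.+1.
Proof.
rewrite conv.
have h := LA m m; have z := zero m.
have hE : E m = (1 - q ^+ m.+1) * D m.+1.
  case: m {h z} => [|m]; first exact: E0.
  exact: Rel2.
have hD := Dclosed m.
rewrite /D /E !addSn !addnS in hE hD.
rewrite z subr0 hE in h.
have hqm : q ^+ m.+2 != 0 by rewrite expf_neq0.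
have hX : Tg (m + m).+2 m = (k * q ^+ m.+1 * (1 - q ^+ m.+1) * Tg (m + m).+2 m.+1
    - Tg (m + m).+2 m.+1) / q ^+ m.+2.
  apply: (mulfI hqm); rewrite mulrCA divff // mulr1.
  apply: (lin _ _ _ _ 1 h); ring.
rewrite hX hD /P /beta7 (e7E m.+1) /= exprD (triS m) exprD.
rewrite [(2 * m.+1)%N]mulnC exprM expr2 [q ^+ m.+2]exprS.
have h3 := qq_neq0 m.+1; have h4 : q ^+ tri m != 0 by rewrite expf_neq0.
have h5 : q ^+ m.+1 != 0 by rewrite expf_neq0.
move: ((-1) ^+ m.+1) (qpoch k q m.+1) (qpoch q q m.+1) h3 (q ^+ tri m) h4 (q ^+ m.+1) h5 => s A B hB X hX0 Y hY.
field.
by rewrite hq0 hY hX0 hB.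
Qed.

End Proof7.


Theorem mainTheorem7 (R : fieldType) (k q : R)
  (hq0 : q != 0) (hq : forall m : nat, (0 < m)%N -> q ^+ m != 1) :
  WP_Bailey_pair 1 k q (alpha7 q) (beta7 k q).
Proof.
split; first by [].
case=> [|m].
  rewrite big_ord1 /qpoch !big_ord0 /alpha7 /beta7 /=.
  by rewrite !(mul1r, mulr1, invr1).
rewrite -(@final R k q hq0 hq m) big_mkord; apply: eq_bigr => j _.
by rewrite divr1 mul1r /c mulf_div.
Qed.
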